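(* For every integer $a \ge 4$ divisible by four and every odd integer $b \ge 3$, $R_\mathrm{cyc}(M_a^\mathrm{nest}, S_b) \ge a + b - 3$, where $S_b$ is any star graph of order $b$.
   Context: All graphs are finite, simple and undirected, and a graph of order $n$ has vertex set $\{0,1,\ldots,n-1\}$; $K_n$ is the complete graph on $\{0,\ldots,n-1\}$. A $2$-edge-coloring of $K_n$ assigns each edge a color in $\{1,2\}$. For a graph $H$ and such a coloring, an embedding of $H$ in color $j$ is an injective map $\varphi\colon V(H)\to V(K_n)$ such that for every edge $uv$ of $H$ the edge $\{\varphi(u),\varphi(v)\}$ has color $j$; it is increasing up to a cyclic permutation if there exists $t\in V(H)$ such that $(\varphi(t),\ldots,\varphi(|H|-1),\varphi(0),\ldots,\varphi(t-1))$ is increasing. The cyclic Ramsey number $R_\mathrm{cyc}(H_1,H_2)$ is the smallest $n$ such that every $2$-edge-coloring of $K_n$ admits an embedding of $H_1$ in color $1$ or of $H_2$ in color $2$ that is increasing up to a cyclic permutation. For even $n\ge2$, the nested matching $M_n^\mathrm{nest}$ is the graph of order $n$ whose edges are $\{v,n-1-v\}$ for $0\le v\le n/2-1$. A star graph of order $n$ is a graph on $\{0,\ldots,n-1\}$ in which one vertex (the center, arbitrary) is adjacent to all others and there are no other edges; the value of $R_\mathrm{cyc}$ does not depend on the choice of center. *)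

(* Defs.v *)
From mathcomp Require Import all_boot.
Set Implicit Arguments. Unset Strict Implicit. Unset Printing Implicit Defensive.

(* A graph of order h on vertex set {0,..,h-1} is given by its edge relation
   E : rel 'I_h (only its values on pairs matter; the graphs used below are
   symmetric and irreflexive). *)

Definition coloring (n : nat) (c : 'I_n -> 'I_n -> nat) : Prop :=
  (forall x y, c x y = c y x) /\ (forall x y, x != y -> c x y \in [:: 1; 2]).

Definition embedding_in_color (h n : nat) (E : rel 'I_h)
    (c : 'I_n -> 'I_n -> nat) (j : nat) (phi : 'I_h -> 'I_n) : Prop :=
  injective phi /\ (forall u v, E u v -> c (phi u) (phi v) = j).

(* Position of vertex i in the rotated sequence (t, t+1, ..., h-1, 0, ..., t-1). *)
Definition rot_pos (h : nat) (t i : 'I_h) : nat := (i + h - t) %% h.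

Definition increasing_up_to_cyclic (h n : nat) (phi : 'I_h -> 'I_n) : Prop :=
  exists t : 'I_h, forall i j : 'I_h,
    rot_pos t i < rot_pos t j -> phi i < phi j.

Definition cyc_ramsey_prop (h1 : nat) (E1 : rel 'I_h1) (h2 : nat) (E2 : rel 'I_h2)
    (n : nat) : Prop :=
  forall c : 'I_n -> 'I_n -> nat, coloring c ->
    (exists phi : 'I_h1 -> 'I_n,
        embedding_in_color E1 c 1 phi /\ increasing_up_to_cyclic phi) \/
    (exists psi : 'I_h2 -> 'I_n,
        embedding_in_color E2 c 2 psi /\ increasing_up_to_cyclic psi).

(* R_cyc(H1,H2) >= m, where R_cyc is the smallest n with the property
   (and +infinity if no such n exists): the property fails for all n < m. *)
Definition Rcyc_ge (h1 : nat) (E1 : rel 'I_h1) (h2 : nat) (E2 : rel 'I_h2)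
    (m : nat) : Prop :=
  forall n, n < m -> ~ cyc_ramsey_prop E1 E2 n.

(* Nested matching M_n^nest: edges {v, n-1-v}, 0 <= v <= n/2 - 1
   (for even n, exactly the pairs u,v with u + v = n - 1). *)
Definition nest_matching (n : nat) : rel 'I_n :=
  fun u v => (u + v == n.-1) && (u != v).

Definition star (b : nat) (ctr : 'I_b) : rel 'I_b :=
  fun u v => (u != v) && ((u == ctr) || (v == ctr)).

Arguments nest_matching n : clear implicits.
Arguments star b ctr : clear implicits.

(* Main.v *)
Require Import Defs.
From mathcomp Require Import all_boot.
From mathcomp Require Import zify.
Set Implicit Arguments. Unset Strict Implicit. Unset Printing Implicit Defensive.

Definition col1 (k h d : nat) : bool :=
  (d <= k - 2) || (2*h+1 - (k-2) <= d) || (d == h) || (d == h.+1).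
Definition colr (k h n : nat) (x y : 'I_n) : nat :=
  if col1 k h (maxn x y - minn x y) then 1 else 2.

Lemma rp_eq a (t i : 'I_a) : rot_pos t i = if t <= i then i - t else i + a - t.
Proof.
rewrite /rot_pos. have ti := ltn_ord t; have ii := ltn_ord i.
case: leqP => hh.
- have -> : i + a - t = (i - t) + a by lia.
  rewrite modnDr modn_small //; lia.
- rewrite modn_small //; lia.
Qed.

Lemma spread a n (phi : 'I_a -> 'I_n) (t : 'I_a) :
 (forall i j : 'I_a, rot_pos t i < rot_pos t j -> phi i < phi j) ->
 (forall i : 'I_a, rot_pos t i <= phi i /\ phi i + (a - rot_pos t i) <= n) /\
 (forall i j : 'I_a, rot_pos t i <= rot_pos t j ->
     phi i + (rot_pos t j - rot_pos t i) <= phi j).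
Proof.
move=> inc.
have ta := ltn_ord t.
pose vn p := if p + t < a then p + t else p + t - a.
pose y p := phi (insubd t (vn p) : 'I_a).
have vnv : forall p, (vn p = p + t /\ p + t < a) \/ (vn p = p + t - a /\ a <= p + t).
  by move=> p; rewrite /vn; case: ltnP => H; [left|right].
have vnlt : forall p, p < a -> vn p < a.
  by move=> p pa; case: (vnv p) => -[-> H]; lia.
have rpv : forall p, p < a -> rot_pos t (insubd t (vn p)) = p.
  move=> p pa; rewrite rp_eq val_insubd vnlt //.
  by case: (vnv p) => -[-> H1]; case: leqP => H2; lia.
have yinc : forall p q, p < q -> q < a -> y p < y q.
  by move=> p q pq qa; apply: inc; rewrite !rpv //; lia.
have ylow : forall p, p < a -> p <= y p.
  elim=> [|p IH] pa //.
  have := yinc p p.+1 (ltnSn p) pa. have := IH (ltnW pa). lia.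
have ydiff : forall p q, p <= q -> q < a -> y p + (q - p) <= y q.
  move=> p; elim=> [|q IH] pq qa.
    have -> : p = 0 by lia. by rewrite addn0.
  case: (leqP p q) => H.
    have := IH H (ltnW qa). have := yinc q q.+1 (ltnSn q) qa. lia.
  have -> : p = q.+1 by lia. by rewrite subnn addn0.
have yrp : forall i, y (rot_pos t i) = phi i.
  move=> i; rewrite /y; congr phi; apply: val_inj.
  have ia := ltn_ord i.
  have rpa : rot_pos t i < a by rewrite rp_eq; case: (leqP t i) => H; lia.
  rewrite val_insubd vnlt //.
  case: (vnv (rot_pos t i)) => -[-> H2]; move: H2 rpa; rewrite rp_eq;
    by case: (leqP t i) => H1; rewrite [val i]/=; lia.
split.
- move=> i; have rpa : rot_pos t i < a by rewrite rp_eq; have := ltn_ord i; case: (leqP t i) => H; lia.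
  rewrite -yrp; split; first exact: ylow.
  have a1 : a.-1 < a by lia.
  have := ydiff _ _ (_ : rot_pos t i <= a.-1) a1.
  have := ltn_ord (y a.-1). move=> H1 H2. have := H2 ltac:(lia). lia.
- move=> i j H; rewrite -(yrp i) -(yrp j); apply: ydiff => //.
  by rewrite rp_eq; case: (leqP t j) => H'; have := ltn_ord j; lia.
Qed.

Lemma fin m h n A B C D : 0 < m -> n <= 2*h+1 ->
  [\/ [/\ A+1 <= B, B+2*m-1 <= C, C+1 <= D & D+2*m-1 <= n+A],
      [/\ B+2*m-1 <= C, C+1 <= D, D+2*m-1 <= A & A+1 <= n+B],
      [/\ C+1 <= D, D+2*m-1 <= A, A+1 <= B & B+2*m-1 <= n+C] |
      [/\ D+2*m-1 <= A, A+1 <= B, B+2*m-1 <= C & C+1 <= n+D]] ->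
  col1 (2*m) h (maxn A D - minn A D) ->
  col1 (2*m) h (maxn B C - minn B C) -> False.
Proof.
move=> m0 nN; rewrite /col1.
case=> -[H1 H2 H3 H4].
- by rewrite (maxn_idPr (_ : A <= D)) ?(minn_idPl (_ : A <= D)); try lia.
- by rewrite (maxn_idPl (_ : D <= A)) ?(minn_idPr (_ : D <= A)); try lia.
- by rewrite (maxn_idPl (_ : D <= A)) ?(minn_idPr (_ : D <= A)); try lia.
- by rewrite (maxn_idPl (_ : D <= A)) ?(minn_idPr (_ : D <= A)); try lia.
Qed.

Lemma no_ladder a m h n (phi : 'I_a -> 'I_n) (t : 'I_a) :
  a = 4*m -> 0 < m -> n <= 2*h+1 ->
  (forall u v : 'I_a, nest_matching a u v -> colr (2*m) h (phi u) (phi v) = 1) ->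
  (forall i j, rot_pos t i < rot_pos t j -> phi i < phi j) -> False.
Proof.
move=> am m0 nN E inc.
have [S1 S2] := spread inc.
have ta := ltn_ord t.
have rpc : forall i : 'I_a, (rot_pos t i + t = i /\ t <= i) \/
                           (rot_pos t i + t = i + a /\ i < t).
  move=> i; rewrite rp_eq; have := ltn_ord i.
  by case: (leqP t i) => H; [left|right]; lia.
have S1' : forall i : 'I_a, rot_pos t i <= phi i /\ phi i + a <= n + rot_pos t i.
  move=> i; have [H1 H2] := S1 i; have := rpc i; have := ltn_ord i; lia.
have S2' : forall i j : 'I_a, rot_pos t i <= rot_pos t j ->
    phi i + rot_pos t j <= phi j + rot_pos t i.
  move=> i j H; have := S2 i j H; lia.
have l0 : m.-1 < a by lia.
have l1 : m < a by lia.
have l2 : (3*m).-1 < a by lia.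
have l3 : 3*m < a by lia.
pose U0 := Ordinal l0. pose U1 := Ordinal l1.
pose V1 := Ordinal l2. pose V0 := Ordinal l3.
have vU0 : (U0 : nat) + 1 = m by rewrite /=; lia.
have vU1 : (U1 : nat) = m by [].
have vV1 : (V1 : nat) + 1 = 3*m by rewrite /=; lia.
have vV0 : (V0 : nat) = 3*m by [].
have e0 : nest_matching a U0 V0 by rewrite /nest_matching -val_eqE /=; lia.
have e1 : nest_matching a U1 V1 by rewrite /nest_matching -val_eqE /=; lia.
have c0 := E _ _ e0. have c1 := E _ _ e1.
move: c0 c1; rewrite /colr.
case: ifP => // C0 _; case: ifP => // C1 _.
apply: (fin m0 nN _ C0 C1).
have [S1a S1b] := S1' U0. have [S1c S1d] := S1' U1.
have [S1e S1f] := S1' V1. have [S1g S1h] := S1' V0.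
clear S1 S2 S1' E inc C0 C1.
case: (rpc U0) => -[r0 q0]; case: (rpc U1) => -[r1 q1];
case: (rpc V1) => -[r2 q2]; case: (rpc V0) => -[r3 q3];
try (exfalso; lia);
try have ? := (S2' U0 U1 ltac:(lia)); try have ? := (S2' U0 V1 ltac:(lia));
try have ? := (S2' U0 V0 ltac:(lia)); try have ? := (S2' U1 U0 ltac:(lia));
try have ? := (S2' U1 V1 ltac:(lia)); try have ? := (S2' U1 V0 ltac:(lia));
try have ? := (S2' V1 U0 ltac:(lia)); try have ? := (S2' V1 U1 ltac:(lia));
try have ? := (S2' V1 V0 ltac:(lia)); try have ? := (S2' V0 U0 ltac:(lia));
try have ? := (S2' V0 U1 ltac:(lia)); try have ? := (S2' V0 V1 ltac:(lia));
clear S2'.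
all: first [ by apply: Or41; split; lia | by apply: Or42; split; lia
           | by apply: Or43; split; lia | by apply: Or44; split; lia ].
Qed.

Definition off (h x y : nat) : nat := if x <= y then y - x else 2*h+1 - (x - y).
Definition G (k h x y : nat) : nat :=
  if off h x y <= h - 1 then off h x y - (k-1) else off h x y - (h+2) + (h-k+1).

Lemma off_spec k h x y : x < 2*h+1 -> y < 2*h+1 -> 1 <= k ->
  col1 k h (maxn x y - minn x y) = false ->
  [/\ k - 1 <= off h x y <= h - 1 \/ h + 2 <= off h x y <= 2*h+1 - (k-1),
      off h x y < 2*h+1 & x + off h x y = y \/ x + off h x y = y + (2*h+1)].
Proof.
move=> xN yN k1; rewrite /col1 /off.
case: (leqP x y) => H.
- by move=> C; split; lia.
- by move=> C; split; lia.
Qed.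

Lemma G_bound k h x y : x < 2*h+1 -> y < 2*h+1 -> 2 <= k ->
  col1 k h (maxn x y - minn x y) = false -> G k h x y < 2*h + 2 - 2*k.
Proof.
move=> xN yN k2 C; have k1 : 1 <= k by lia.
have [H1 H2 H3] := off_spec xN yN k1 C.
rewrite /G; case: ifP => H; lia.
Qed.

Lemma G_inj k h x y z : x < 2*h+1 -> y < 2*h+1 -> z < 2*h+1 -> 1 <= k ->
  col1 k h (maxn x y - minn x y) = false ->
  col1 k h (maxn x z - minn x z) = false -> G k h x y = G k h x z -> y = z.
Proof.
move=> xN yN zN k1 C1 C2.
have [H1 H2 H3] := off_spec xN yN k1 C1.
have [K1 K2 K3] := off_spec xN zN k1 C2.
have : off h x y = off h x z -> y = z by lia.
rewrite /G; case: ifP => ?; case: ifP => ?; lia.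
Qed.

Lemma no_star b m h n (ctr : 'I_b) (psi : 'I_b -> 'I_n) :
  n <= 2*h+1 -> 0 < m -> injective psi ->
  (forall u, u != ctr -> colr (2*m) h (psi ctr) (psi u) = 2) ->
  b.-1 <= 2*h + 2 - 2*(2*m).
Proof.
move=> nN m0 inj E.
have k2 : 2 <= 2*m by lia.
have k1 : 1 <= 2*m by lia.
have xN : psi ctr < 2*h+1 by have := ltn_ord (psi ctr); lia.
have col : forall u, u != ctr ->
    col1 (2*m) h (maxn (psi ctr) (psi u) - minn (psi ctr) (psi u)) = false.
  by move=> u /E; rewrite /colr; case: ifP.
have yN : forall u, psi u < 2*h+1 by move=> u; have := ltn_ord (psi u); lia.
pose s0 := enum (predC1 ctr).
pose s1 := map (fun u => G (2*m) h (psi ctr) (psi u)) s0.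
have U : uniq s1.
  rewrite map_inj_in_uniq ?enum_uniq // => u v; rewrite !mem_enum /= => hu hv eq.
  apply: inj; apply: val_inj; apply: (G_inj xN (yN u) (yN v) k1 (col u hu) (col v hv) eq).
have Sb : {subset s1 <= iota 0 (2*h + 2 - 2*(2*m))}.
  move=> z /mapP [u]; rewrite mem_enum /= => hu ->; rewrite mem_iota add0n /=.
  exact: (G_bound xN (yN u) k2 (col u hu)).
have := uniq_leq_size U Sb.
by rewrite size_map size_iota /s0 -cardE cardC1 card_ord.
Qed.

Theorem proposition4p34 (a b : nat) (ctr : 'I_b) :
  4 <= a -> 4 %| a -> 3 <= b -> odd b ->
  Rcyc_ge (nest_matching a) (star b ctr) (a + b - 3).
Proof.
move=> a4 /dvdnP [m am] b3 ob n nlt cp.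
have bj : b = 2 * b./2 + 1.
  have := odd_double_half b; rewrite ob -muln2; lia.
set j := b./2 in bj.
have m0 : 0 < m by lia.
pose h := 2*m + j - 2.
have nN : n <= 2*h+1 by rewrite /h; lia.
have cc : coloring (@colr (2*m) h n).
  split.
  - by move=> x y; rewrite /colr maxnC minnC.
  - by move=> x y _; rewrite /colr; case: ifP.
case: (cp _ cc).
- move=> [phi [[inj E] [t inc]]].
  apply: (no_ladder (m := m) (h := h) _ m0 nN _ inc); first by lia.
  by move=> u v uv; apply: E.
- move=> [psi [[inj E] [t inc]]].
  have H : forall u, u != ctr -> colr (2*m) h (psi ctr) (psi u) = 2.
    by move=> u hu; apply: E; rewrite /star eq_refl /= eq_sym hu.
  have := no_star nN m0 inj H.
  rewrite /h; lia.
Qed.
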